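(* Let $1\leq s\leq r\leq n$ and $d=n+r+2$. For a general $n$-tuple $(A_1,\dots,A_n)\in X^{n,r,s}$, the corresponding local algebra has socle dimension $r-s+1$; equivalently $\dim_{\mathbb{K}}\bigcap_{i=1}^n\ker A_i=r-s+1$.
   Context: $\mathbb{K}$ is algebraically closed of characteristic zero. $X^{n,r,s}$ is the set of $n$-tuples $(A_1,\dots,A_n)$ of pairwise commuting $d\times d$ matrices over $\mathbb{K}$ for which there is a basis of $\mathbb{K}^d$ in which each $A_i$ has the block form $$A_i=\begin{bmatrix}0 & b_i^T & c_i^T & 0\\ 0&0&D_i&0\\ 0&0&0&f_i\\ 0&0&0&0\end{bmatrix}$$ with diagonal blocks of sizes $1,r,n,1$, where $b_i\in\mathbb{K}^r$, $c_i,f_i\in\mathbb{K}^n$, $D_i\in\mathbb{K}^{r\times n}$, such that $f_1,\dots,f_n$ are linearly independent, $\bigcap_i\ker D_i^T=0$, and $\dim\operatorname{Span}\{b_1,\dots,b_n\}=s$. Such a tuple has a cyclic vector $v$ (the last basis vector) and corresponds to the local algebra $R/I$, $R=\mathbb{K}[\alpha_1,\dots,\alpha_n]$, where $I$ is the kernel of $f\mapsto f(A_1,\dots,A_n)v$; its socle dimension equals $\dim\bigcap_i\ker A_i$. ''General'' means: for all tuples in a nonempty open subset of $X^{n,r,s}$. *)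

(* Defs.v *)
From HB Require Import structures.
From mathcomp Require Import all_boot all_order all_algebra.
From mathcomp Require Import mpoly.
From mathcomp Require Import zify.
Set Implicit Arguments. Unset Strict Implicit. Unset Printing Implicit Defensive.
Import Order.TTheory GRing.Theory Num.Theory.
Local Open Scope ring_scope.

(* Dimension bookkeeping: blocks of sizes 1, r, n, 1, so d = n + r + 2. *)
Lemma blk_dimE (n r : nat) : (1 + (r + (n + 1)) = n + r + 2)%N.
Proof. lia. Qed.

(* The block matrix
     [ 0  b^T  c^T  0 ]
     [ 0   0    D   0 ]
     [ 0   0    0   f ]
     [ 0   0    0   0 ]
   with diagonal blocks of sizes 1, r, n, 1, viewed as a (n+r+2)x(n+r+2) matrix. *)
Definition blockform (K : nzRingType) (n r : nat)
  (b : 'cV[K]_r) (c f : 'cV[K]_n) (D : 'M[K]_(r, n)) : 'M[K]_(n + r + 2) :=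
  castmx (blk_dimE n r, blk_dimE n r)
    (block_mx (0 : 'M[K]_1) (row_mx b^T (row_mx c^T (0 : 'M[K]_1)))
              (0 : 'M[K]_(r + (n + 1), 1))
              (block_mx (0 : 'M[K]_r) (row_mx D (0 : 'M[K]_(r, 1)))
                        (0 : 'M[K]_(n + 1, r))
                        (block_mx (0 : 'M[K]_n) f (0 : 'M[K]_(1, n)) (0 : 'M[K]_1)))).

(* The variety X^{n,r,s}: n-tuples of pairwise commuting (n+r+2)x(n+r+2) matrices
   which, in some basis (columns of an invertible P), have the above block form with
   f_1..f_n linearly independent, /\_i ker D_i^T = 0, dim Span{b_i} = s. *)
Definition in_X (K : fieldType) (n r s : nat) (A : 'I_n -> 'M[K]_(n + r + 2)) : Prop :=
  (forall i j, A i *m A j = A j *m A i) /\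
  exists (P : 'M[K]_(n + r + 2)) (b : 'I_n -> 'cV[K]_r) (c f : 'I_n -> 'cV[K]_n)
         (D : 'I_n -> 'M[K]_(r, n)),
    [/\ P \in unitmx,
        forall i, invmx P *m A i *m P = blockform (b i) (c i) (f i) (D i),
        row_free (\matrix_(i < n) (f i)^T),
        (forall v : 'cV[K]_r, (forall i, (D i)^T *m v = 0) -> v = 0)
      & \rank (\matrix_(i < n) (b i)^T) = s].

Definition tuple_coords (K : Type) (n d : nat) (A : 'I_n -> 'M[K]_d)
  : 'I_#|{: 'I_n * 'I_d * 'I_d}| -> K :=
  fun k => let: (i, a, b) := enum_val k in A i a b.

(* A property holds for a general point of a subset X of (M_d(K))^n if it holds on
   a nonempty (Zariski-)open subset of X, i.e. on X \ V(S) for a finite set S of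
   polynomials in the matrix entries, with X \ V(S) nonempty. *)
Definition general (K : fieldType) (n d : nat)
  (X : ('I_n -> 'M[K]_d) -> Prop) (Q : ('I_n -> 'M[K]_d) -> Prop) : Prop :=
  exists S : seq {mpoly K[#|{: 'I_n * 'I_d * 'I_d}|]},
    (exists A, X A /\ has (fun p => p.@[tuple_coords A] != 0) S) /\
    (forall A, X A -> has (fun p => p.@[tuple_coords A] != 0) S -> Q A).

(* dim_K of the common kernel /\_i ker A_i (kernels of A_i acting on column vectors). *)
Definition common_ker_dim (K : fieldType) (n d : nat) (A : 'I_n -> 'M[K]_d) : nat :=
  \rank (\bigcap_(i < n) kermx (A i)^T)%MS.

(* Main.v *)
Require Import Defs.
From HB Require Import structures.
From mathcomp Require Import all_boot all_order all_algebra.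
From mathcomp Require Import mpoly.
From mathcomp Require Import zify.
Set Implicit Arguments. Unset Strict Implicit. Unset Printing Implicit Defensive.
Import Order.TTheory GRing.Theory Num.Theory.
Local Open Scope ring_scope.

Lemma castmx_mulr (R : pzRingType) m p q q' (e : q = q') (A : 'M[R]_(m, p)) B :
  castmx (erefl m, e) (A *m B) = A *m castmx (erefl p, e) B.
Proof. by case: q' / e. Qed.

Lemma castmx_mul2 (R : pzRingType) m p p' q q' (e1 : p = p') (e2 : q = q')
  (A : 'M[R]_(m, p)) (B : 'M[R]_(p, q)) :
  castmx (erefl m, e1) A *m castmx (e1, e2) B = castmx (erefl m, e2) (A *m B).
Proof. by case: p' / e1; case: q' / e2. Qed.

Lemma castmx_mul3 (R : pzRingType) m m' p p' q q' (e0 : m = m') (e1 : p = p') (e2 : q = q')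
  (A : 'M[R]_(m, p)) (B : 'M[R]_(p, q)) :
  castmx (e0, e1) A *m castmx (e1, e2) B = castmx (e0, e2) (A *m B).
Proof. by case: m' / e0; case: p' / e1; case: q' / e2. Qed.

Lemma rank_castmx (F : fieldType) m m' p p' (e1 : m = m') (e2 : p = p')
  (A : 'M[F]_(m, p)) : \rank (castmx (e1, e2) A) = \rank A.
Proof. by case: m' / e1; case: p' / e2. Qed.

Lemma castmx_eq0 (R : pzRingType) m m' p p' (e1 : m = m') (e2 : p = p')
  (A : 'M[R]_(m, p)) : (castmx (e1, e2) A == 0) = (A == 0).
Proof. by case: m' / e1; case: p' / e2. Qed.

Lemma kerblock (K : fieldType) n r m (b : 'cV[K]_r) (c f : 'cV[K]_n) (D : 'M[K]_(r, n))
  (X : 'M[K]_(m, 1)) (Y : 'M[K]_(m, r)) (Z : 'M[K]_(m, n)) (W : 'M[K]_(m, 1)) :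
  castmx (erefl m, blk_dimE n r) (row_mx X (row_mx Y (row_mx Z W))) *m (blockform b c f D)^T
  = castmx (erefl m, blk_dimE n r)
      (row_mx (Y *m b + Z *m c) (row_mx (Z *m D^T) (row_mx (W *m f^T) 0))).
Proof.
rewrite /blockform trmx_cast /= castmx_mul2; congr castmx.
rewrite !tr_block_mx !tr_row_mx !trmx0 !trmxK.
rewrite (mul_row_block X) !mulmx0 !add0r (mul_row_block Y) !mulmx0 !add0r.
rewrite !mul_row_col ?mulmx0 ?addr0 ?add0r row_mx0 mulmx0 add0r mul_mx_row mulmx0.
by [].
Qed.

Definition Gm (K : fieldType) n r m (Q : 'M[K]_(m, r)) : 'M[K]_(1 + m, n + r + 2) :=
  castmx (erefl (1 + m), blk_dimE n r) (block_mx 1 0 0 (row_mx Q (0 : 'M_(m, n + 1)))).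

Lemma rank_Gm (K : fieldType) n r m (Q : 'M[K]_(m, r)) :
  \rank (Gm n Q) = (1 + \rank Q)%N.
Proof. by rewrite /Gm rank_castmx rank_diag_block_mx rank_row_mx0 mxrank1. Qed.

Lemma GmE (K : fieldType) n r m (Q : 'M[K]_(m, r)) :
  Gm n Q = castmx (erefl (1 + m), blk_dimE n r)
    (row_mx (col_mx 1 0) (row_mx (col_mx 0 Q) (row_mx (0 : 'M_(1 + m, n)) 0))).
Proof.
rewrite /Gm block_mxEh; congr castmx; congr row_mx.
by rewrite -[0 : 'M_(1, r + (n + 1))]row_mx0 -block_mxEv block_mxEh col_mx0 row_mx0.
Qed.

Lemma Gm_ker (K : fieldType) n r m (Q : 'M[K]_(m, r)) b c f D :
  Q *m b = 0 -> Gm n Q *m (blockform b c f D)^T = 0.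
Proof.
move=> Qb; rewrite GmE kerblock mul_col_mx Qb !mul0mx ?mulmx0 ?col_mx0 ?addr0 ?row_mx0.
by apply/eqP; rewrite castmx_eq0.
Qed.

Lemma lower (K : fieldType) n r s (A : 'I_n -> 'M[K]_(n + r + 2)) :
  @in_X K n r s A -> (1 + (r - s) <= common_ker_dim A)%N.
Proof.
case=> _ [P [b [c [f [D [Pu HM _ _ Hs]]]]]].
set Bm := \matrix_(i < n) (b i)^T.
set Q := kermx Bm^T.
have HQ : forall i, Q *m b i = 0.
  move=> i; have -> : b i = Bm^T *m ('e_i)^T.
    by rewrite -trmx_mul -rowE rowK trmxK.
  by rewrite mulmxA mulmx_ker mul0mx.
have rQ : \rank (Gm n Q) = (1 + (r - s))%N.
  by rewrite rank_Gm mxrank_ker mxrank_tr Hs.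
have HA : forall i, A i = P *m blockform (b i) (c i) (f i) (D i) *m invmx P.
  move=> i; rewrite -HM !mulmxA mulmxV // mul1mx -mulmxA mulmxV // mulmx1.
  done.
rewrite -rQ /common_ker_dim -(mxrankMfree _ (_ : row_free P^T)); last first.
  by rewrite row_free_unit unitmx_tr.
apply: mxrankS; apply/sub_bigcapmxP => i _; apply/sub_kermxP.
rewrite HA !trmx_mul !mulmxA -(mulmxA _ P^T) -trmx_mul mulVmx // trmx1 mulmx1.
by rewrite Gm_ker // mul0mx.
Qed.

Definition wb (K : fieldType) r s n (i : 'I_n) : 'cV[K]_r :=
  \col_a ((a == i :> nat) && (i < s)%N)%:R.
Definition wc (K : fieldType) r n (i : 'I_n) : 'cV[K]_n :=
  \col_k ((k == i :> nat) && (r <= i)%N)%:R.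
Definition wf (K : fieldType) n (i : 'I_n) : 'cV[K]_n :=
  \col_k (k == i :> nat)%:R.
Definition wD (K : fieldType) r n (i : 'I_n) : 'M[K]_(r, n) :=
  \matrix_(a, k) ((a == i :> nat) && (k == i :> nat))%:R.
Definition A0 (K : fieldType) n r s (i : 'I_n) : 'M[K]_(n + r + 2) :=
  blockform (@wb K r s n i) (@wc K r n i) (@wf K n i) (@wD K r n i).

Lemma blockform_mul0 (K : fieldType) n r (b b' : 'cV[K]_r) (c c' f f' : 'cV[K]_n)
  (D D' : 'M[K]_(r, n)) :
  b^T *m D' = 0 -> c^T *m f' = 0 -> D *m f' = 0 ->
  blockform b c f D *m blockform b' c' f' D' = 0.
Proof.
move=> h1 h2 h3.
rewrite /blockform castmx_mul3.
apply/eqP; rewrite castmx_eq0; apply/eqP.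
rewrite mulmx_block !mul0mx !mulmx0 !add0r.
rewrite mul_row_block !mulmx0 !add0r mul_mx_row h1 mulmx0.
rewrite (mul_row_block c^T) !mulmx0 !add0r h2 !row_mx0 addr0.
rewrite mulmx_block !mulmx0 !add0r.
rewrite (mul_row_block D) !mulmx0 !add0r mul_mx_row h3 !mulmx0 !row_mx0.
rewrite (mul0mx _ D') (mul0mx _ (row_mx D' 0)) mulmx_block !mulmx0 !add0r ?addr0 !row_mx0 ?addr0.
by rewrite !(mul0mx _ f') !block_mx0.
Qed.

Lemma wbD (K : fieldType) n r s (i j : 'I_n) : (i : nat) != j ->
  (@wb K r s n i)^T *m @wD K r n j = 0.
Proof.
move=> nij; apply/matrixP=> x y; rewrite !mxE; apply: big1 => a _; rewrite !mxE.
case: (a =P i :> nat) => [ai|] /=; last by rewrite mul0r.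
case: (a =P j :> nat) => [aj|] /=; last by rewrite mulr0.
by move: nij; rewrite -ai -aj eqxx.
Qed.

Lemma wcf (K : fieldType) n r (i j : 'I_n) : (i : nat) != j ->
  (@wc K r n i)^T *m @wf K n j = 0.
Proof.
move=> nij; apply/matrixP=> x y; rewrite !mxE; apply: big1 => a _; rewrite !mxE.
case: (a =P i :> nat) => [ai|] /=; last by rewrite mul0r.
case: (a =P j :> nat) => [aj|] /=; last by rewrite mulr0.
by move: nij; rewrite -ai -aj eqxx.
Qed.

Lemma wDf (K : fieldType) n r (i j : 'I_n) : (i : nat) != j ->
  @wD K r n i *m @wf K n j = 0.
Proof.
move=> nij; apply/matrixP=> x y; rewrite !mxE; apply: big1 => a _; rewrite !mxE.
case: (a =P i :> nat) => [ai|] /=; last by rewrite andbF mul0r.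
case: (a =P j :> nat) => [aj|] /=; last by rewrite mulr0.
by move: nij; rewrite -ai -aj eqxx.
Qed.

Lemma A0_in_X (K : fieldType) n r s : (s <= r)%N -> (r <= n)%N -> @in_X K n r s (@A0 K n r s).
Proof.
move=> sr rn; split.
  move=> i j; have [->//|nij] := eqVneq i j.
  have nij' : (i : nat) != j by [].
  have nji' : (j : nat) != i by rewrite eq_sym.
  by rewrite /A0 !blockform_mul0 ?wbD ?wcf ?wDf.
exists 1%:M, (@wb K r s n), (@wc K r n), (@wf K n), (@wD K r n); split.
- exact: unitmx1.
- by move=> i; rewrite invmx1 mul1mx mulmx1.
- have -> : \matrix_(i < n) (@wf K n i)^T = 1%:M.
    by apply/matrixP=> i j; rewrite !mxE eq_sym.
  by rewrite row_free_unit unitmx1.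
- move=> v Hv; apply/matrixP=> a z; rewrite [z]ord1 mxE.
  pose i : 'I_n := Ordinal (leq_trans (ltn_ord a) rn).
  have := congr1 (fun M : 'cV[K]_n => M i 0) (Hv i); rewrite !mxE (bigD1 a) //= !mxE eqxx /=.
  rewrite big1 ?addr0 ?mul1r //.
  move=> a' na'; rewrite !mxE.
  by rewrite (_ : (a' == i :> nat) = false) ?mul0r //; apply/negbTE.
- transitivity (\rank (pid_mx s : 'M[K]_(n, r))).
    by congr mxrank; apply/matrixP=> i j; rewrite !mxE eq_sym.
  by rewrite rank_pid_mx // (leq_trans sr rn).
Qed.

Lemma copidE (K : fieldType) r s (x a : 'I_r) :
  (copid_mx s : 'M[K]_r) x a = ((x == a) && (s <= a)%N)%:R.
Proof.
rewrite /copid_mx !mxE; case: (x =P a) => [->|nxa] /=; last by rewrite (_ : (x == a :> nat) = false) ?subr0 //; apply/negbTE; apply/eqP => h; apply: nxa; apply: val_inj.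
by rewrite eqxx /=; case: (ltnP a s) => //= _; rewrite ?subrr ?subr0.
Qed.

Lemma upper (K : fieldType) n r s : (1 <= s)%N -> (s <= r)%N -> (r <= n)%N ->
  (common_ker_dim (@A0 K n r s) <= 1 + (r - s))%N.
Proof.
move=> s1 sr rn.
rewrite /common_ker_dim; set U := (\bigcap_(i < n) _)%MS.
have HU i : U *m (@A0 K n r s i)^T = 0.
  by move/sub_bigcapmxP: (submx_refl U) => /(_ i isT)/sub_kermxP.
set U' := castmx (erefl, esym (blk_dimE n r)) U.
set X := lsubmx U'; set Y := lsubmx (rsubmx U').
set Z := lsubmx (rsubmx (rsubmx U')); set W := rsubmx (rsubmx (rsubmx U')).
have UE : U = castmx (erefl, blk_dimE n r) (row_mx X (row_mx Y (row_mx Z W))).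
  by rewrite !hsubmxK /U' castmxKV.
have H i : [/\ Y *m @wb K r s n i + Z *m @wc K r n i = 0,
    Z *m (@wD K r n i)^T = 0 & W *m (@wf K n i)^T = 0].
  move: (HU i); rewrite UE /A0 kerblock => /eqP; rewrite castmx_eq0 !row_mx_eq0.
  by case/andP=> /eqP h1 /andP[/eqP h2 /andP[/eqP h3 _]].
have n0 : (0 < n)%N by apply: leq_trans rn; apply: leq_trans sr.
have W0 : W = 0.
  apply/matrixP=> p q; rewrite [q]ord1 mxE.
  pose i0 : 'I_n := Ordinal n0.
  have [_ _ h3] := H i0.
  have := congr1 (fun M : 'M[K]_(n + r + 2, n) => M p i0) h3.
  by rewrite !mxE big_ord1 !mxE eqxx mulr1.
have Z0 : Z = 0.
  apply/matrixP=> p k; rewrite mxE.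
  have [h1 h2 _] := H k.
  case: (ltnP k r) => kr.
    pose a : 'I_r := Ordinal kr.
    have := congr1 (fun M : 'M[K]_(n + r + 2, r) => M p a) h2.
    rewrite !mxE (bigD1 k) //= !mxE eqxx /= mulr1 big1 ?addr0 // => x nx.
    rewrite !mxE (_ : (x == k :> nat) = false) ?andbF ?mulr0 //; exact/negbTE.
  have := congr1 (fun M : 'M[K]_(n + r + 2, 1) => M p 0) h1.
  rewrite !mxE big1 ?add0r => [|a _]; last first.
    by rewrite !mxE (_ : (k < s)%N = false) ?andbF ?mulr0 //; apply/negbTE; rewrite -leqNgt (leq_trans sr).
  rewrite (bigD1 k) //= !mxE eqxx kr /= mulr1 big1 ?addr0 // => x nx.
  rewrite !mxE (_ : (x == k :> nat) = false) ?mulr0 //; exact/negbTE.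
have YQ : Y = Y *m copid_mx s.
  apply/matrixP=> p a; rewrite [RHS]mxE (bigD1 a) //= big1 ?addr0 => [|x nx]; last first.
    by rewrite copidE (_ : (x == a) = false) ?mulr0 //; apply/negbTE.
  rewrite copidE eqxx /=.
  case: (ltnP a s) => as_; last by rewrite mulr1.
  rewrite mulr0.
  pose i : 'I_n := Ordinal (leq_trans (ltn_ord a) rn).
  have [h1 _ _] := H i.
  have := congr1 (fun M : 'M[K]_(n + r + 2, 1) => M p 0) h1.
  rewrite Z0 mul0mx addr0 mxE (bigD1 a) //= !mxE eqxx as_ /= mulr1 big1 ?addr0 // => x nx.
  rewrite !mxE (_ : (x == i :> nat) = false) ?mul0r ?mulr0 //; exact/negbTE.
have -> : U = row_mx X Y *m Gm n (copid_mx s : 'M[K]_r).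
  rewrite UE /Gm -castmx_mulr mul_row_block mulmx1 !mulmx0 addr0 add0r mul_mx_row mulmx0.
  by rewrite Z0 W0 row_mx0 -YQ.
apply: leq_trans (mxrankM_maxr _ _) _.
by rewrite rank_Gm rank_copid_mx.
Qed.

Definition Big (K : fieldType) n d (A : 'I_n -> 'M[K]_d) : 'M[K]_(d, #|{: 'I_n * 'I_d}|) :=
  \matrix_(a, k) A (enum_val k).1 (enum_val k).2 a.

Lemma ckd_Big (K : fieldType) n d (A : 'I_n -> 'M[K]_d) :
  common_ker_dim A = (d - \rank (Big A))%N.
Proof.
rewrite /common_ker_dim -mxrank_ker; apply/eqmx_rank/andP; split.
- apply/sub_kermxP; apply/matrixP => p k; rewrite [RHS]mxE.
  set U := (\bigcap_(i < n) _)%MS.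
  have HU i : U *m (A i)^T = 0.
    by move/sub_bigcapmxP: (submx_refl U) => /(_ i isT)/sub_kermxP.
  have := congr1 (fun M : 'M[K]_d => M p (enum_val k).2) (HU (enum_val k).1).
  rewrite [in RHS]mxE => <-; rewrite !mxE; apply: eq_bigr => a _; rewrite !mxE.
  done.
- apply/sub_bigcapmxP => i _; apply/sub_kermxP; apply/matrixP => p b.
  have := congr1 (fun M : 'M[K]_(d, #|{: 'I_n * 'I_d}|) => M p (enum_rank (i, b))) (mulmx_ker (Big A)).
  rewrite !mxE => h; apply: etrans h; apply: eq_bigr => a _.
  by rewrite !mxE enum_rankK.
Qed.

Definition BigP (K : fieldType) n d :
  'M[{mpoly K[#|{: 'I_n * 'I_d * 'I_d}|]}]_(d, #|{: 'I_n * 'I_d}|) :=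
  \matrix_(a, k) 'X_(enum_rank ((enum_val k).1, (enum_val k).2, a)).

Lemma BigP_eval (K : fieldType) n d (A : 'I_n -> 'M[K]_d) :
  map_mx (meval (tuple_coords A)) (@BigP K n d) = Big A.
Proof.
by apply/matrixP => a k; rewrite !mxE mevalXU /tuple_coords enum_rankK.
Qed.

Lemma p_eval (K : fieldType) n d k (A : 'I_n -> 'M[K]_d) (Nm : 'M[K]_(k, d))
  (Cm : 'M[K]_(#|{: 'I_n * 'I_d}|, k)) :
  (\det (map_mx (fun x : K => x%:MP) Nm *m @BigP K n d *m map_mx (fun x : K => x%:MP) Cm)).@[tuple_coords A]
  = \det (Nm *m Big A *m Cm).
Proof.
rewrite -det_map_mx !map_mxM BigP_eval; congr (\det (_ *m _ *m _));
  by apply/matrixP => ? ?; rewrite !mxE; apply: mevalC.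
Qed.

Unset Implicit Arguments.

Theorem lemma4p6 (K : closedFieldType) (n r s : nat) :
  [pchar K] =i pred0 ->
  (1 <= s)%N -> (s <= r)%N -> (r <= n)%N ->
  general (@in_X K n r s) (fun A => common_ker_dim A = (r - s + 1)%N).
Proof.
move=> _ s1 sr rn.
pose A0' := @A0 K n r s.
have X0 : @in_X K n r s A0' := @A0_in_X K n r s sr rn.
have dim0 : common_ker_dim A0' = (1 + (r - s))%N.
  by apply/eqP; rewrite eqn_leq upper //= lower.
set B0 := Big A0'.
set k := \rank B0.
pose Nm : 'M[K]_(k, n + r + 2) := pid_mx k *m invmx (col_ebase B0).
pose Cm : 'M[K]_(_, k) := invmx (row_ebase B0) *m pid_mx k.
have NC0 : Nm *m B0 *m Cm = 1%:M.
  rewrite -{1}(mulmx_ebase B0) /Nm /Cm !mulmxA (mulmxKV (col_ebase_unit B0)).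
  rewrite (mulmxK (row_ebase_unit B0)) !mul_pid_mx minnn.
  rewrite (minn_idPr (rank_leq_row B0)) minnn (minn_idPr (rank_leq_col B0)).
  exact: pid_mx_1.
exists [:: \det (map_mx (fun x : K => x%:MP) Nm *m @BigP K n (n + r + 2)
                 *m map_mx (fun x : K => x%:MP) Cm)].
split.
  exists A0'; split => //=; rewrite orbF p_eval NC0 det1 oner_neq0 //.
move=> A XA; rewrite /= orbF p_eval => hp.
have Hk : (k <= \rank (Big A))%N.
  have <- : \rank (Nm *m Big A *m Cm) = k.
    by rewrite mxrank_unit // unitmxE unitfE.
  exact: leq_trans (mxrankM_maxl _ _) (mxrankM_maxr _ _).
apply/eqP; rewrite eqn_leq (addnC (r - s)%N 1) lower // andbT.
rewrite ckd_Big -dim0 ckd_Big.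
exact: leq_sub2l.
Qed.
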